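(* Let $E$ be a (Hausdorff, real) topological vector space. The following are equivalent: (i) $E$ contains the topological vector space $\mathbb{R}^{(\mathbb{N})}$ as a (topologically isomorphic) subspace; (ii) $E$ contains the topological group $\mathbb{Z}^{(\mathbb{N})}$ as a (topologically isomorphic) subgroup; (iii) $E$ has an infinite absolutely Cauchy summable subset. Moreover, if $E$ is complete, these three conditions are also equivalent to: (iv) $E$ contains the topological vector space $\mathbb{R}^{\mathbb{N}}$ as a (topologically isomorphic) subspace.
   Context: $\mathbb{R}^{\mathbb{N}}$ and $\mathbb{Z}^{\mathbb{N}}$ carry the Tychonoff product topology ($\mathbb{Z}$ discrete), and $\mathbb{R}^{(\mathbb{N})}$, $\mathbb{Z}^{(\mathbb{N})}$ denote the subsets of finitely supported sequences, with the subspace topology of the product. A subset $A$ of $E$ (viewed as an abelian topological group) is absolutely Cauchy summable if for every neighbourhood $U$ of $0$ there is a finite $F\subseteq A$ such that the additive subgroup generated by $A\setminus F$ is contained in $U$. *)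

(* Defs.v *)
From HB Require Import structures.
From mathcomp Require Import all_boot all_order all_algebra.
From mathcomp Require Import all_classical all_reals all_analysis.
Set Implicit Arguments. Unset Strict Implicit. Unset Printing Implicit Defensive.
Import Order.TTheory GRing.Theory Num.Theory.
Import numFieldTopology.Exports.
Local Open Scope classical_set_scope.
Local Open Scope ring_scope.

(* Topological vector spaces over R are [topologicalLmodType R]:
   an R-module with a topology making addition, opposite and scaling
   (R carrying its usual topology) continuous. *)

Definition fin_supp {T : zmodType} (x : nat -> T) : Prop :=
  finite_set [set i | x i != 0].

(* f restricted to A is a topological embedding (homeomorphism of A,
   with the subspace topology, onto f @` A, with the subspace topology) *)
Definition embedding_on {X Y : topologicalType} (A : set X) (f : X -> Y) : Prop :=
  [/\ {in A &, injective f},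
      (forall x, A x -> forall V, nbhs (f x) V ->
         exists U, nbhs x U /\ forall y, A y -> U y -> V (f y))
    & (* f^-1 : f @` A -> A continuous (subspace topologies) *)
      (forall x, A x -> forall U, nbhs x U ->
         exists V, nbhs (f x) V /\ forall y, A y -> V (f y) -> U y)].

Notation RN R := {ptws nat -> R}.
Notation ZN := {ptws nat -> discrete_topology int}.

Definition contains_RfinN (R : realType) (E : topologicalLmodType R) : Prop :=
  exists f : RN R -> E,
    (forall (a : R) (x y : RN R), fin_supp (x : nat -> R) -> fin_supp (y : nat -> R) ->
       f (fun i => a * x i + y i) = a *: f x + f y)
    /\ embedding_on (fun x : RN R => fin_supp (x : nat -> R)) f.

Definition contains_ZfinN (R : realType) (E : topologicalLmodType R) : Prop :=
  exists f : ZN -> E,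
    (forall x y : ZN, fin_supp (x : nat -> int) -> fin_supp (y : nat -> int) ->
       f (fun i => (x i : int) + (y i : int)) = f x + f y)
    /\ embedding_on (fun x : ZN => fin_supp (x : nat -> int)) f.

Definition contains_RN (R : realType) (E : topologicalLmodType R) : Prop :=
  exists f : RN R -> E,
    (forall (a : R) (x y : RN R), f (fun i => a * x i + y i) = a *: f x + f y)
    /\ embedding_on [set: RN R] f.

Definition is_add_subgroup {G : zmodType} (H : set G) : Prop :=
  H 0 /\ forall x y, H x -> H y -> H (x - y).

Definition gen_add_subgroup {G : zmodType} (B : set G) : set G :=
  \bigcap_(H in [set H : set G | is_add_subgroup H /\ B `<=` H]) H.

Definition abs_cauchy_summable {G : topologicalZmodType} (A : set G) : Prop :=
  forall U : set G, nbhs (0 : G) U ->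
    exists F : set G, [/\ finite_set F, F `<=` A & gen_add_subgroup (A `\` F) `<=` U].

Definition has_inf_acs_subset (R : realType) (E : topologicalLmodType R) : Prop :=
  exists A : set E, infinite_set A /\ abs_cauchy_summable A.

(* completeness of a topological vector space (w.r.t. its canonical
   translation-invariant uniformity): every Cauchy filter converges *)
Definition tvs_complete (R : realType) (E : topologicalLmodType R) : Prop :=
  forall F : set_system E, ProperFilter F ->
    (forall U : set E, nbhs (0 : E) U ->
       exists2 B, F B & forall x y, B x -> B y -> U (x - y)) ->
    exists x : E, F --> x.

(* Main.v *)
Require Import Defs.
From HB Require Import structures.
From mathcomp Require Import all_boot all_order all_algebra.
From mathcomp Require Import all_classical all_reals all_analysis.
From mathcomp Require Import lra.
Set Implicit Arguments. Unset Strict Implicit. Unset Printing Implicit Defensive.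
Import Order.TTheory GRing.Theory Num.Theory.
Import numFieldTopology.Exports.
Local Open Scope classical_set_scope.
Local Open Scope ring_scope.

Section TVS.
Variables (R : realType) (E : topologicalLmodType R).
Implicit Types (U V W : set E).

Lemma nb_add0 U : nbhs (0:E) U ->
  exists V, nbhs (0:E) V /\ forall x y, V x -> V y -> U (x + y).
Proof.
move=> U0.
have := @add_continuous E (0, 0) U; rewrite /= addr0 => /(_ U0).
move=> [[P Q] [/= HP HQ] sub].
exists (P `&` Q); split; first exact: filterI.
by move=> x y [Px _] [_ Qy]; apply: (sub (x, y)).
Qed.

Lemma nb_scale (c : R) U : nbhs (0:E) U -> nbhs (0:E) [set x | U (c *: x)].
Proof.
move=> U0.
have := @scale_continuous R E (c, 0) U; rewrite /= scaler0 => /(_ U0).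
move=> [[P Q] [/= HP HQ] sub].
apply: filterS HQ => x Qx; apply: (sub (c, x)); split => //.
exact: nbhs_singleton HP.
Qed.

Lemma nb_small (b : E) U : nbhs (0:E) U ->
  exists2 d : R, 0 < d & forall r : R, `|r| < d -> U (r *: b).
Proof.
move=> U0.
have := @scale_continuous R E (0, b) U; rewrite /= scale0r => /(_ U0).
move=> [[P Q] [/= HP HQ] sub].
move: HP => /nbhs_ballP [d /= d0 Hd].
exists d => // r rd; apply: (sub (r, b)); split => /=.
  by apply: Hd; rewrite /ball /= sub0r normrN.
exact: nbhs_singleton HQ.
Qed.

Definition bal U := [set x : E | forall r : R, `|r| <= 1 -> U (r *: x)].

Lemma nb_bal U : nbhs (0:E) U -> nbhs (0:E) (bal U).
Proof.
move=> U0.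
have := @scale_continuous R E (0, 0) U; rewrite /= scaler0 => /(_ U0).
move=> [[P Q] [/= HP HQ] sub].
move: HP => /nbhs_ballP [d /= d0 Hd].
have := nb_scale ((d / 2)^-1) HQ.
apply: filterS => x Qx r r1.
have d2 : 0 < d / 2 by rewrite divr_gt0.
have -> : r *: x = (r * (d / 2)) *: ((d / 2)^-1 *: x).
  by rewrite scalerA -mulrA divff ?mulr1 // gt_eqF.
apply: (sub (_, _)); split => //=.
apply: Hd; rewrite /ball /= sub0r normrN normrM.
rewrite [`|d / 2|]ger0_norm ?divr_ge0 ?ltW //.
have := normr_ge0 r; nra.
Qed.

Lemma bal_sub U : bal U `<=` U.
Proof. by move=> x /(_ 1); rewrite normr1 scale1r; apply. Qed.

Lemma bal_bal U x (r : R) : bal U x -> `|r| <= 1 -> bal U (r *: x).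
Proof.
move=> Bx r1 s s1; rewrite scalerA; apply: Bx.
by rewrite normrM; apply: mulr_ile1.
Qed.

Lemma balN U x : bal U x -> bal U (- x).
Proof. by move=> Bx; rewrite -scaleN1r; apply: bal_bal; rewrite // normrN normr1. Qed.

Lemma bal0 U : nbhs (0:E) U -> bal U 0.
Proof. by move=> /nb_bal /nbhs_singleton. Qed.

Lemma nb_tr (p : E) U : nbhs p U -> nbhs (0:E) [set v | U (p + v)].
Proof.
move=> Up.
have := @add_continuous E (p, 0) U; rewrite /= addr0 => /(_ Up).
move=> [[P Q] [/= HP HQ] sub].
apply: filterS HQ => v Qv; apply: (sub (p, v)); split => //.
exact: nbhs_singleton HP.
Qed.

Lemma nb_trB (x : E) V : nbhs (0:E) V -> nbhs x [set z | V (z - x)].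
Proof.
move=> V0.
have := @add_continuous E (x, - x) V; rewrite /= subrr => /(_ V0).
move=> [[P Q] [/= HP HQ] sub].
apply: filterS HP => z Pz; apply: (sub (z, - x)); split => //.
exact: nbhs_singleton HQ.
Qed.

Lemma nb_trB' (x : E) V : nbhs (0:E) V -> nbhs x [set z | V (x - z)].
Proof.
move=> V0; have := nb_trB x (nb_scale (-1) V0).
by apply: filterS => z /=; rewrite scaleN1r opprB.
Qed.

Lemma hausdorff_nb (a : E) : hausdorff_space E -> a != 0 ->
  exists U, nbhs (0:E) U /\ ~ U a.
Proof.
move=> hE a0; have /hausdorff_accessible := hE.
move=> /(_ 0 a); rewrite eq_sym => /(_ a0) [A [oA A0 Aa]].
exists A; split; first by apply: open_nbhs_nbhs; split => //; rewrite -inE.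
by move: Aa; rewrite in_setC => /negP; rewrite inE.
Qed.

End TVS.
Section Sums.
Variables (R : realType) (E : lmodType R).

Definition comb (c : nat -> R) (a : nat -> E) (N : nat) := \sum_(i < N) c i *: a i.

Lemma comb_ext c a N M : (forall i, (N <= i)%N -> c i = 0) -> (N <= M)%N ->
  comb c a M = comb c a N.
Proof.
move=> c0; elim: M => [|M IH]; first by rewrite leqn0 => /eqP ->.
rewrite leq_eqVlt => /orP [/eqP <- //|]; rewrite ltnS => NM.
by rewrite -IH // /comb big_ord_recr /= c0 // scale0r addr0.
Qed.

Lemma comb_bound c a N M : (forall i, (N <= i)%N -> c i = 0) ->
  (forall i, (M <= i)%N -> c i = 0) -> comb c a N = comb c a M.
Proof.
move=> cN cM; rewrite -(@comb_ext c a N (maxn N M)) ?leq_maxl //.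
by rewrite (@comb_ext c a M) // leq_maxr.
Qed.

Lemma combD c1 c2 a N : comb (fun i => c1 i + c2 i) a N = comb c1 a N + comb c2 a N.
Proof. by rewrite /comb -big_split; apply: eq_bigr => i _; rewrite scalerDl. Qed.

Lemma combZ (k : R) c a N : comb (fun i => k * c i) a N = k *: comb c a N.
Proof. by rewrite /comb scaler_sumr; apply: eq_bigr => i _; rewrite scalerA. Qed.

Lemma combN c a N : comb (fun i => - c i) a N = - comb c a N.
Proof. by rewrite -scaleN1r -combZ; apply: eq_bigr => i _; rewrite mulN1r. Qed.

Lemma comb_eq c1 c2 a N : (forall i, (i < N)%N -> c1 i = c2 i) -> comb c1 a N = comb c2 a N.
Proof. by move=> e; apply: eq_bigr => i _; rewrite e. Qed.

Lemma comb_eqa c a1 a2 N : (forall i, (i < N)%N -> c i != 0 -> a1 i = a2 i) ->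
  comb c a1 N = comb c a2 N.
Proof.
move=> e; apply: eq_bigr => i _; have [->|ci] := eqVneq (c i) 0.
  by rewrite !scale0r.
by rewrite e.
Qed.

Lemma comb_split k c a N : comb c a N =
  comb (fun i => if (i < k)%N then c i else 0) a N +
  comb (fun i => if (i < k)%N then 0 else c i) a N.
Proof.
rewrite -combD; apply: comb_eq => i _; by case: ifP; rewrite ?addr0 ?add0r.
Qed.

Lemma comb_trunc n c a N : (n <= N)%N ->
  comb (fun i => if (i < n)%N then c i else 0) a N = comb c a n.
Proof.
move=> nN; rewrite (@comb_ext _ a n) //; last by move=> i; rewrite leqNgt => /negbTE ->.
by apply: comb_eq => i ->.
Qed.

Lemma comb0 a N : comb (fun=> 0) a N = 0.
Proof. by rewrite /comb big1 // => i _; rewrite scale0r. Qed.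

Lemma comb0' c a N : (forall i, (i < N)%N -> c i = 0) -> comb c a N = 0.
Proof. by move=> h; rewrite (comb_eq _ h) comb0. Qed.

End Sums.

Section FinSupp.

Lemma fs_bound (T : zmodType) (x : nat -> T) : fin_supp x ->
  exists N, forall i, (N <= i)%N -> x i = 0.
Proof.
move=> /finite_fsetP [B HB]; exists (\max_(i <- finmap.enum_fset B) i).+1 => i Ni.
apply/eqP; apply: contraT => xi.
have : [set i | x i != 0] i by [].
rewrite HB /= => iB; have := @leq_bigmax_seq _ (finmap.enum_fset B) xpredT id i iB erefl.
by rewrite leqNgt Ni.
Qed.

Lemma bound_fs (T : zmodType) (x : nat -> T) N :
  (forall i, (N <= i)%N -> x i = 0) -> fin_supp x.
Proof.
move=> h; apply: (@sub_finite_set _ _ `I_N); last exact: finite_II.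
move=> i /= xi; rewrite ltnNge; apply/negP => Ni.
by move: xi; rewrite h // eqxx.
Qed.

End FinSupp.

Section Boxes.

Lemma box_nbhs (T : topologicalType) (x : nat -> T) k (P : nat -> set T) :
  (forall i, nbhs (x i) (P i)) ->
  nbhs (x : {ptws nat -> T}) [set y : {ptws nat -> T} | forall i, (i < k)%N -> P i (y i)].
Proof.
move=> hP; elim: k => [|k IH].
  by apply: (@filterS _ _ _ setT); [by [] | exact: filterT].
have hk : nbhs (x : {ptws nat -> T}) [set y : {ptws nat -> T} | P k (y k)].
  exact: (@proj_continuous nat (fun=> T) k x) (hP k).
apply: filterS (filterI IH hk) => y [h1 h2] i; rewrite ltnS leq_eqVlt.
by case/orP => [/eqP ->|]; [exact: h2|exact: h1].
Qed.

End Boxes.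
Section Boxes2.
Variable R : realType.

Lemma boxR_nbhs (x : nat -> R) k (d : R) : 0 < d ->
  nbhs (x : RN R) [set y : RN R | forall i, (i < k)%N -> `|y i - x i| < d].
Proof.
move=> d0; have := @box_nbhs R x k (fun i => ball (x i) d) (fun i => nbhsx_ballx (x i) d d0).
by apply: filterS => y h i ik; have := h i ik; rewrite /ball /= distrC.
Qed.

Lemma nbhs_boxR (x : nat -> R) (U : set (RN R)) : nbhs (x : RN R) U ->
  exists k (d : R), 0 < d /\ forall y, (forall i, (i < k)%N -> `|y i - x i| < d) -> U y.
Proof.
pose G := [set U : set (RN R) | exists k (d : R), 0 < d /\
   forall y, (forall i, (i < k)%N -> `|y i - x i| < d) -> U y].
have FG : Filter G.
  constructor.
  - by exists 0%N, 1; split.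
  - move=> A B [k1 [d1 [d10 h1]]] [k2 [d2 [d20 h2]]].
    exists (maxn k1 k2), (Num.min d1 d2); split; first by rewrite lt_min d10.
    move=> y hy; split.
      apply: h1 => i ik.
      have := hy i (leq_trans ik (leq_maxl _ _)).
      by rewrite lt_min => /andP [].
    apply: h2 => i ik.
    have := hy i (leq_trans ik (leq_maxr _ _)).
    by rewrite lt_min => /andP [].
  - by move=> A B AB [k [d [d0 h]]]; exists k, d; split => // y /h /AB.
have cG : {ptws, G --> x}.
  apply/(@pointwise_cvgP nat R _ x FG) => t A /nbhs_ballP [e /= e0 He].
  exists t.+1, e; split => // y hy; apply: He; rewrite /ball /= distrC.
  exact: hy.
by move=> /cG.
Qed.

Lemma boxZ_nbhs (x : nat -> int) k :
  nbhs (x : ZN) [set y : ZN | forall i, (i < k)%N -> y i = x i].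
Proof.
have := @box_nbhs (discrete_topology int) x k (fun i => [set x i])
  (fun i => @discrete_set1 (discrete_topology int) (x i)).
by apply: filterS.
Qed.

Lemma nbhs_boxZ (x : nat -> int) (U : set ZN) : nbhs (x : ZN) U ->
  exists k, forall y, (forall i, (i < k)%N -> y i = x i) -> U y.
Proof.
pose G := [set U : set ZN | exists k,
   forall y, (forall i, (i < k)%N -> y i = x i) -> U y].
have FG : Filter G.
  constructor.
  - by exists 0%N.
  - move=> A B [k1 h1] [k2 h2].
    exists (maxn k1 k2) => y hy; split.
      by apply: h1 => i ik; apply: hy; apply: leq_trans ik (leq_maxl _ _).
    by apply: h2 => i ik; apply: hy; apply: leq_trans ik (leq_maxr _ _).
  - by move=> A B AB [k h]; exists k => y /h /AB.
have cG : {ptws, G --> (x : nat -> discrete_topology int)}.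
  apply/(@pointwise_cvgP nat (discrete_topology int) _ x FG) => t A At.
  have Axt : A (x t) by exact: nbhs_singleton At.
  by exists t.+1 => y hy; rewrite /= hy.
by move=> /cG.
Qed.

End Boxes2.
Section Span.
Variables (R : realType) (E : topologicalLmodType R).
Implicit Types (U V W : set E).

Lemma fcc (a : nat -> E) k U : nbhs (0:E) U ->
  exists2 d : R, 0 < d & forall N c, (forall i, (i < k)%N -> `|c i| < d) ->
    (forall i, (k <= i)%N -> c i = 0) -> U (comb c a N).
Proof.
elim: k U => [|k IH] U U0.
  exists 1 => // N c _ c0; rewrite comb0' => [|i _]; last exact: c0.
  exact: nbhs_singleton U0.
have [V [V0 VU]] := nb_add0 U0.
have [d1 d10 h1] := IH V V0.
have [d2 d20 h2] := nb_small (a k) V0.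
exists (Num.min d1 d2); first by rewrite lt_min d10.
move=> N c cs cz; rewrite (comb_split k); apply: VU.
  apply: h1 => i ik; last by rewrite ltnNge ik.
  rewrite ik; have := cs i (ltnW ik); rewrite lt_min => /andP [].
  by [].
have [kN|Nk] := ltnP k N.
  rewrite (@comb_ext _ _ _ _ k.+1) //; last first.
    by move=> i ki; rewrite ltnNge (ltnW ki) /= cz.
  rewrite /comb big_ord_recr /= ltnn big1 ?add0r; last first.
    by move=> i _; rewrite ltn_ord scale0r.
  apply: h2; have := cs k (ltnSn k); rewrite lt_min => /andP [].
  by [].
rewrite comb0'; last by move=> i iN; rewrite (leq_trans iN Nk).
by rewrite -(scale0r (a k)); apply: h2; rewrite normr0.
Qed.

Lemma subgroup_add (H : set E) x y : is_add_subgroup H -> H x -> H y -> H (x + y).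
Proof.
move=> [H0 HB] Hx Hy; have := HB _ _ Hx (HB _ _ H0 Hy).
by rewrite sub0r opprK.
Qed.

Lemma subgroup_int (H : set E) x (m : int) : is_add_subgroup H -> H x -> H (m%:~R *: x).
Proof.
move=> Hs Hx; rewrite scaler_int.
have [H0 HB] := Hs.
have Hn n : H (x *+ n).
  elim: n => [|n IH]; first by rewrite mulr0n.
  by rewrite mulrS; apply: subgroup_add.
case: m => n; first exact: Hn.
by rewrite NegzE mulrNz; have := HB _ _ H0 (Hn n.+1); rewrite sub0r.
Qed.

Lemma subgroup_comb (H : set E) (m : nat -> int) b N : is_add_subgroup H ->
  (forall i, (i < N)%N -> H (b i)) -> H (comb (fun i => (m i)%:~R) b N).
Proof.
move=> Hs; elim: N => [|N IH] hb; first by rewrite /comb big_ord0; case: Hs.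
rewrite /comb big_ord_recr /=; apply: subgroup_add => //.
  by apply: IH => i iN; apply: hb; apply: ltnW.
by apply: subgroup_int => //; apply: hb.
Qed.

Lemma span_small (A : set E) : abs_cauchy_summable A ->
  forall U, nbhs (0:E) U -> exists F, [/\ finite_set F, F `<=` A &
    forall N c b, (forall i, (i < N)%N -> (A `\` F) (b i)) -> U (comb c b N)].
Proof.
move=> acs U U0.
have [V [V0 VU]] := nb_add0 U0.
have [F [Ff FA FW]] := acs _ (nb_bal V0).
exists F; split => // N c b hb.
have [d d0 hd] := fcc b N V0.
pose M := (Num.truncn (d^-1)).+1.
have Md : d^-1 < M%:R by exact: truncnS_gt.
have M0 : (0 : R) < M%:R by rewrite ltr0n.
pose m i := Num.floor (M%:R * c i).
pose r i := if (i < N)%N then c i - M%:R^-1 * (m i)%:~R else 0.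
have -> : comb c b N = M%:R^-1 *: comb (fun i => (m i)%:~R) b N + comb r b N.
  rewrite -combZ -combD; apply: comb_eq => i iN; rewrite /r iN.
  by rewrite addrC subrK.
apply: VU.
  apply: bal_sub; apply: bal_bal.
    apply: FW; apply: subgroup_comb => //.
    - split; first by move=> H [[]].
      move=> x y hx hy H [Hs HA]; case: (Hs) => _ HB; apply: HB.
        exact: hx.
      exact: hy.
    - move=> i iN H [Hs HA]; exact/HA/hb.
  by rewrite normfV ger0_norm ?ler0n // invf_le1 // ler1n.
apply: hd => i iN; last by rewrite /r ltnNge iN.
rewrite /r iN.
have fl := floor_le (M%:R * c i).
have fg := floorD1_gt (M%:R * c i).
rewrite -/(m i) in fl fg; rewrite intrD in fg.
have dM : M%:R^-1 < d.
  by rewrite -[d]invrK ltf_pV2 // ?posrE ?invr_gt0.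
have Mi0 : 0 < M%:R^-1 :> R by rewrite invr_gt0.
have e1 : c i - M%:R^-1 * (m i)%:~R = M%:R^-1 * (M%:R * c i - (m i)%:~R).
  by rewrite mulrBr mulrA mulVf ?mul1r // gt_eqF.
rewrite e1 normrM ger0_norm ?ltW // ger0_norm; last by rewrite subr_ge0.
apply: le_lt_trans dM; rewrite ler_piMr ?ltW //.
lra.
Qed.

End Span.
Section Construction.
Variables (R : realType) (E : topologicalLmodType R).
Hypothesis hE : hausdorff_space E.
Variable A : set E.
Hypotheses (infA : infinite_set A) (acsA : abs_cauchy_summable A).

Definition Qst (B : set E) (t : E * set E * set E) :=
  let: (a, W, F) := t in
  [/\ A a /\ ~ B a /\ a != 0,
      nbhs (0:E) W /\ (forall x (r : R), W x -> `|r| <= 1 -> W (r *: x)),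
      (forall x y, W x -> W y -> a != x + y),
      finite_set F /\ F `<=` A &
      forall N c b, (forall i, (i < N)%N -> (A `\` F) (b i)) -> W (comb c b N)].

Lemma step_ex0 B : finite_set B -> exists t, Qst B t.
Proof.
move=> fB.
have infD : infinite_set (A `\` (B `|` [set 0])).
  by apply: infinite_setD => //; rewrite finite_setU; split => //; apply: finite_set1.
have [a [Aa Ba]] := infinite_setN0 infD.
have a0 : a != 0 by apply/eqP => a0; apply: Ba; right.
have Ba' : ~ B a by move=> h; apply: Ba; left.
have [U [U0 Ua]] := hausdorff_nb hE a0.
have [V [V0 VU]] := nb_add0 U0.
have [F [Ff FA FW]] := span_small acsA (nb_bal V0).
exists (a, bal V, F); rewrite /Qst; split => //.
- split; first exact: nb_bal.
  by move=> x r Wx r1; apply: bal_bal.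
- move=> x y Wx Wy; apply/eqP => e; apply: Ua; rewrite e.
  by apply: VU; apply: bal_sub.
Qed.

Lemma step_ex B : exists t, finite_set B -> Qst B t.
Proof.
have [fB|nfB] := pselect (finite_set B).
  by have [t Ht] := step_ex0 fB; exists t.
by exists (0, setT, set0).
Qed.

Definition step B := projT1 (cid (step_ex B)).

Lemma stepP B : finite_set B -> Qst B (step B).
Proof. by rewrite /step; case: cid. Qed.

Fixpoint st n : set E := match n with
  | 0 => set0
  | n'.+1 => st n' `|` (step (st n')).2 `|` [set (step (st n')).1.1] end.

Definition sa n := (step (st n)).1.1.
Definition sW n := (step (st n)).1.2.
Definition sF n := (step (st n)).2.

Lemma st_fin n : finite_set (st n).
Proof.
elim: n => [|n IH] /=; first exact: finite_set0.
have := stepP IH; case: (step (st n)) => [[a W] F] /= [_ _ _ [Ff _] _].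
by rewrite !finite_setU; split; [split|] => //; apply: finite_set1.
Qed.

Lemma saP n : Qst (st n) (sa n, sW n, sF n).
Proof.
rewrite /sa /sW /sF; have := stepP (st_fin n).
by case: (step (st n)) => [[a W] F].
Qed.

Lemma st_mono n m : (n <= m)%N -> st n `<=` st m.
Proof.
elim: m => [|m IH]; first by rewrite leqn0 => /eqP ->.
rewrite leq_eqVlt => /orP [/eqP -> //|]; rewrite ltnS => nm x /(IH nm) h.
by left; left.
Qed.

Lemma sa_st n m : (n < m)%N -> st m (sa n) /\ sF n `<=` st m.
Proof.
move=> nm; split.
  by apply: (st_mono nm) => /=; right.
by move=> x Fx; apply: (st_mono nm) => /=; left; right.
Qed.

Lemma sa_notst n : ~ st n (sa n).
Proof. by have [[_ [h _]] _ _ _ _] := saP n. Qed.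

Lemma saA n : A (sa n).
Proof. by have [[h _] _ _ _ _] := saP n. Qed.

Lemma sa_inj : injective sa.
Proof.
move=> n m e; apply/eqP; apply: contraT => nm.
have [lt|lt] := ltnP n m.
  by have := @sa_notst m; rewrite -e => /(_ (sa_st lt).1).
rewrite leq_eqVlt in lt; case/orP: lt => [/eqP e'|lt]; first by rewrite e' eqxx in nm.
by have := @sa_notst n; rewrite e => /(_ (sa_st lt).1).
Qed.

Lemma sa_avoid (s : seq E) : exists k, forall m, (k <= m)%N -> sa m \notin s.
Proof.
elim: s => [|x s [k IH]]; first by exists 0%N.
have [[m0 e]|ne] := pselect (exists m0, sa m0 = x).
  exists (maxn k m0.+1) => m km; rewrite in_cons negb_or IH; last first.
    exact: leq_trans (leq_maxl _ _) km.
  rewrite andbT; apply/eqP => e'; rewrite -e' in e.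
  have := leq_trans (leq_maxr _ _) km; rewrite (sa_inj e) ltnn.
  by [].
exists k => m km; rewrite in_cons negb_or IH // andbT.
by apply/eqP => e; apply: ne; exists m.
Qed.

Lemma S1 U : nbhs (0:E) U -> exists k, forall N c,
  (forall i, (i < k)%N -> c i = 0) -> U (comb c sa N).
Proof.
move=> U0; have [F [Ff FA FW]] := span_small acsA U0.
have [s Fs] := (finite_seqP F).1 Ff.
have [k hk] := sa_avoid s.
exists k => N c c0; rewrite (@comb_eqa _ _ c sa (fun i => sa (maxn i k))).
  apply: FW => i _; split; first exact: saA.
  rewrite Fs /=; apply/negP; exact: hk (leq_maxr _ _).
move=> i _ ci; congr sa; apply/esym/maxn_idPl; rewrite leqNgt.
by apply: contra ci => ik; rewrite c0.
Qed.

Lemma S2 j : [/\ nbhs (0:E) (sW j),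
   (forall x (r : R), sW j x -> `|r| <= 1 -> sW j (r *: x)),
   (forall x y, sW j x -> sW j y -> sa j != x + y) &
   forall N c, (forall i, (i <= j)%N -> c i = 0) -> sW j (comb c sa N)].
Proof.
have [_ [W0 Wb] Wa _ FW] := saP j; split => // N c c0.
rewrite (@comb_eqa _ _ c sa (fun i => sa (maxn i j.+1))).
  apply: FW => i _; split; first exact: saA.
  by move=> Fi; apply: (@sa_notst (maxn i j.+1)); apply: (sa_st (leq_maxr _ _)).2.
move=> i _ ci; congr sa; apply/esym/maxn_idPl; rewrite ltnNge.
by apply: contra ci => ik; rewrite c0.
Qed.

End Construction.
Section RepTheory.
Variables (R : realType) (E : topologicalLmodType R).
Variables (a : nat -> E) (W : nat -> set E).
Hypothesis hS1 : forall U, nbhs (0:E) U -> exists k, forall N c,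
  (forall i, (i < k)%N -> c i = 0) -> U (comb c a N).
Hypothesis hW0 : forall j, nbhs (0:E) (W j).
Hypothesis hWb : forall j x (r : R), W j x -> `|r| <= 1 -> W j (r *: x).
Hypothesis hWa : forall j x y, W j x -> W j y -> a j != x + y.
Hypothesis hWt : forall j N c, (forall i, (i <= j)%N -> c i = 0) -> W j (comb c a N).

Definition Rep (t : nat -> R) (e : E) := forall V, nbhs (0:E) V -> forall k,
  exists M, (k <= M)%N /\ V (e - comb t a M).

Lemma Rep_scale (c : R) t e : Rep t e -> Rep (fun i => c * t i) (c *: e).
Proof.
move=> h V V0 k; have [M [kM HM]] := h _ (nb_scale c V0) k.
by exists M; split => //; rewrite combZ -scalerBr.
Qed.

Lemma Rep_cont U : nbhs (0:E) U -> exists k (d : R), 0 < d /\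
  forall t e, Rep t e -> (forall i, (i < k)%N -> `|t i| < d) -> U e.
Proof.
move=> U0; have [V1 [V10 h1]] := nb_add0 U0.
have [V2 [V20 h2]] := nb_add0 V10.
have [k hk] := hS1 V20.
have [d d0 hd] := fcc a k V20.
exists k, d; split => // t e Rt td.
have [M [kM HM]] := Rt _ V10 k.
rewrite -(subrK (comb t a M) e); apply: h1 => //.
rewrite (comb_split k); apply: h2.
  apply: hd => i ik; first by rewrite ik; exact: td.
  by rewrite ltnNge ik.
by apply: hk => i ->.
Qed.

Lemma comb_single (x : R) j N : (j < N)%N ->
  comb (fun i => if i == j then x else 0) a N = x *: a j.
Proof.
move=> jN; rewrite (@comb_ext _ _ _ _ j.+1) //; last first.
  by move=> i ji; case: eqP => // e; rewrite e ltnn in ji.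
rewrite /comb big_ord_recr /= eqxx big1 ?add0r // => i _.
by rewrite (ltn_eqF (ltn_ord i)) scale0r.
Qed.

Lemma Rep_coef j (eps : R) : 0 < eps -> exists V, nbhs (0:E) V /\
  forall t e, Rep t e -> V e -> forall i, (i < j)%N -> `|t i| < eps.
Proof.
elim: j eps => [|j IH] eps eps0.
  by exists setT; split; [exact: filterT|].
have [V1 [V10 hV1]] : exists V1, nbhs (0:E) V1 /\
    forall t e, Rep t e -> V1 e -> `|t j| < 1.
  have [N1 [N10 hN1]] := nb_add0 (hW0 j).
  have [N2 [N20 hN2]] := nb_add0 N10.
  pose N := bal (N1 `&` N2).
  have N0 : nbhs (0:E) N by apply: nb_bal; apply: filterI.
  have h3 x y z : N x -> N y -> N z -> W j (x + y + z).
    move=> Nx Ny Nz; apply: hN1; last by have [] := bal_sub Nz.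
    by apply: hN2; [have [] := bal_sub Nx|have [] := bal_sub Ny].
  have [eta eta0 heta] := fcc a j N0.
  have [V0 [V00 hV0]] := IH eta eta0.
  exists (V0 `&` N); split; first exact: filterI.
  move=> t e Rt [V0e Ne]; rewrite ltNge; apply/negP => tj1.
  have tj0 : t j != 0 by apply: contraTneq tj1 => ->; rewrite normr0 ler10.
  have [M [jM HM]] := Rt _ N0 j.+1.
  pose h := comb (fun i => if (i < j)%N then t i else 0) a M.
  pose s := comb (fun i => if (i <= j)%N then 0 else t i) a M.
  have hN : N h.
    apply: heta => i ij; last by rewrite ltnNge ij.
    by rewrite ij; apply: (hV0 _ _ Rt V0e).
  have sW : W j s by apply: hWt => i ->.
  have ec : comb t a M = h + t j *: a j + s.
    rewrite -(@comb_single (t j) j M jM) -!combD; apply: comb_eq => i _.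
    by case: (ltngtP i j) => [||->]; rewrite ?addr0 ?add0r.
  have Wts : W j (t j *: a j + s).
    have -> : t j *: a j + s = e + - (e - comb t a M) + - h.
      by rewrite opprB [e + _]addrC subrK ec -[h + _ + s]addrA [_ - h]addrC addKr.
    by apply: h3 => //; apply: balN.
  have n1 : `|(t j)^-1| <= 1 by rewrite normfV invf_le1 // normr_gt0.
  have n2 : `|- (t j)^-1| <= 1 by rewrite normrN.
  have := hWa (hWb Wts n1) (hWb sW n2).
  by rewrite scalerDr scalerA mulVf // scale1r scaleNr addrK eqxx.
have [V2 [V20 hV2]] := IH eps eps0.
exists (V2 `&` [set x | V1 (eps^-1 *: x)]); split.
  by apply: filterI => //; apply: nb_scale.
move=> t e Rt [V2e V1e] i; rewrite ltnS leq_eqVlt => /orP [/eqP ->|ij].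
  have := hV1 _ _ (Rep_scale eps^-1 Rt) V1e.
  rewrite normrM normfV (gtr0_norm eps0) => h.
  have e1 : eps^-1 * eps = 1 by rewrite mulVf // gt_eqF.
  have ei : 0 < eps^-1 by rewrite invr_gt0.
  have := normr_ge0 (t j); nra.
exact: hV2 Rt V2e i ij.
Qed.

Lemma abs0 (r : R) : (forall eps : R, 0 < eps -> `|r| < eps) -> r = 0.
Proof.
move=> h; apply/eqP; apply: contraT => r0.
by have := h `|r|; rewrite normr_gt0 ltxx => /(_ r0).
Qed.

Lemma emb_gen (T : RN R -> E) (D : set (RN R)) :
  (forall x y, D x -> D y -> D (fun i => y i - x i)) ->
  (forall x y, D x -> D y -> T (fun i => y i - x i) = T y - T x) ->
  (forall x, D x -> Rep x (T x)) -> embedding_on D T.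
Proof.
move=> DB TB DR; split.
- move=> x y; rewrite !in_setE => Dx Dy e.
  have R0 : Rep (fun i => x i - y i) 0 by rewrite -(subrr (T x)) {2}e -TB //; apply: DR; apply: DB.
  apply: functional_extensionality_dep => i; apply/eqP; rewrite -subr_eq0; apply/eqP.
  apply: abs0 => eps eps0; have [V [V0 hV]] := Rep_coef i.+1 eps0.
  exact: (hV _ _ R0 (nbhs_singleton V0) i (ltnSn i)).
- move=> x Dx V VTx.
  have [k [d [d0 hk]]] := Rep_cont (nb_tr VTx).
  exists [set y : RN R | forall i, (i < k)%N -> `|y i - x i| < d]; split.
    exact: boxR_nbhs.
  move=> y Dy hy; have := hk _ _ (DR _ (DB _ _ Dx Dy)) hy.
  by rewrite /= TB // addrC subrK.
- move=> x Dx U Ux.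
  have [k [d [d0 hk]]] := nbhs_boxR Ux.
  have [V [V0 hV]] := Rep_coef k d0.
  exists [set z | V (z - T x)]; split; first exact: nb_trB.
  move=> y Dy /= hy; apply: hk => i ik.
  by apply: (hV _ _ (DR _ (DB _ _ Dx Dy))) => //; rewrite TB.
Qed.

Definition bnd (x : nat -> R) : nat :=
  match pselect (exists N, forall i, (N <= i)%N -> x i = 0) with
  | left h => projT1 (cid h)
  | right _ => 0%N end.

Lemma bndP x N : (forall i, (N <= i)%N -> x i = 0) ->
  forall i, (bnd x <= i)%N -> x i = 0.
Proof.
move=> hN; rewrite /bnd; case: pselect => [h|[]]; last by exists N.
by case: cid.
Qed.

Definition Tf (x : RN R) : E := comb x a (bnd x).

Lemma TfE x N : (forall i, (N <= i)%N -> x i = 0) -> Tf x = comb x a N.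
Proof. by move=> hN; rewrite /Tf (@comb_bound _ _ x a _ N) //; apply: bndP hN. Qed.

Lemma Tf_lin (c : R) (x y : RN R) : fin_supp (x : nat -> R) -> fin_supp (y : nat -> R) ->
  Tf (fun i => c * x i + y i) = c *: Tf x + Tf y.
Proof.
move=> /fs_bound [Nx hx] /fs_bound [Ny hy].
have hx' i : (maxn Nx Ny <= i)%N -> x i = 0.
  by move=> h; apply: hx; apply: leq_trans h; apply: leq_maxl.
have hy' i : (maxn Nx Ny <= i)%N -> y i = 0.
  by move=> h; apply: hy; apply: leq_trans h; apply: leq_maxr.
rewrite (TfE hx') (TfE hy') (@TfE _ (maxn Nx Ny)); last first.
  by move=> i h; rewrite hx' ?hy' ?mulr0 ?addr0.
by rewrite combD combZ.
Qed.

Lemma Tf_sub (x y : RN R) : fin_supp (x : nat -> R) -> fin_supp (y : nat -> R) ->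
  Tf (fun i => y i - x i) = Tf y - Tf x.
Proof.
move=> fx fy; rewrite -(scaleN1r (Tf x)) addrC -Tf_lin //.
by congr Tf; apply: functional_extensionality_dep => i; rewrite mulN1r addrC.
Qed.

Lemma Tf_Rep (x : RN R) : fin_supp (x : nat -> R) -> Rep x (Tf x).
Proof.
move=> /fs_bound [N hN] V V0 k; exists (maxn k N); split; first exact: leq_maxl.
rewrite (TfE hN) (@comb_ext _ _ x a N) ?leq_maxr // subrr.
exact: nbhs_singleton V0.
Qed.

Lemma fs_sub (x y : nat -> R) : fin_supp x -> fin_supp y -> fin_supp (fun i => y i - x i).
Proof.
move=> /fs_bound [Nx hx] /fs_bound [Ny hy]; apply: (@bound_fs _ _ (maxn Nx Ny)) => i h.
rewrite hx ?hy ?subr0 //; apply: leq_trans h; [apply: leq_maxr|apply: leq_maxl].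
Qed.

Lemma contains_RfinN_of : contains_RfinN E.
Proof.
exists Tf; split; first by move=> c x y; apply: Tf_lin.
apply: emb_gen.
- by move=> x y; apply: fs_sub.
- by move=> x y; apply: Tf_sub.
- exact: Tf_Rep.
Qed.

Definition Conv (x : nat -> R) (e : E) := (fun n => comb x a n) @ \oo --> e.

Lemma conv_ex (hc : tvs_complete E) x : exists e, Conv x e.
Proof.
apply: hc => U U0; have [k hk] := hS1 U0.
exists [set u | exists n, (k <= n)%N /\ u = comb x a n].
  by exists k => // n kn; exists n.
move=> u v [n [kn ->]] [m [km ->]].
rewrite -(@comb_trunc _ _ n x a (maxn n m)) ?leq_maxl //.
rewrite -(@comb_trunc _ _ m x a (maxn n m)) ?leq_maxr //.
rewrite -combN -combD; apply: hk => i ik.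
by rewrite (leq_trans ik kn) (leq_trans ik km) subrr.
Qed.

Lemma conv_lin (c : R) x y e1 e2 : Conv x e1 -> Conv y e2 ->
  Conv (fun i => c * x i + y i) (c *: e1 + e2).
Proof.
move=> C1 C2 U U0.
have [V [V0 hV]] := nb_add0 (nb_tr U0).
have h1 := C1 _ (nb_trB e1 (nb_scale c V0)).
have h2 := C2 _ (nb_trB e2 V0).
have [k1 _ hk1] := h1; have [k2 _ hk2] := h2.
exists (maxn k1 k2) => // n kn.
have h1n := hk1 n (leq_trans (leq_maxl _ _) kn).
have h2n := hk2 n (leq_trans (leq_maxr _ _) kn).
have := hV _ _ h1n h2n; rewrite /= combD combZ scalerBr.
by rewrite addrACA [c *: e1 + _]addrC [e2 + _]addrC !subrK.
Qed.

Lemma conv_Rep x e : Conv x e -> Rep x e.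
Proof.
move=> C V V0 k; have [k0 _ h] := C _ (nb_trB' e V0).
exists (maxn k k0); split; first exact: leq_maxl.
by apply: h; apply: leq_maxr.
Qed.

Definition Lf (x : RN R) : E := xget 0 [set e | Conv x e].

Lemma Lf_conv (hc : tvs_complete E) x : Conv x (Lf x).
Proof. exact: xgetPex (@conv_ex hc x). Qed.

Lemma Lf_lin (hE : hausdorff_space E) (hc : tvs_complete E) (c : R) (x y : RN R) :
  Lf (fun i => c * x i + y i) = c *: Lf x + Lf y.
Proof.
have PF : ProperFilter ((fun n => comb (fun i => c * x i + y i) a n) @ \oo).
  exact: fmap_proper_filter.
apply: (@cvg_unique E hE _ PF).
  exact: (@Lf_conv hc (fun i => c * x i + y i)).
exact: (@conv_lin c x y _ _ (@Lf_conv hc x) (@Lf_conv hc y)).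
Qed.

Lemma contains_RN_of (hE : hausdorff_space E) (hc : tvs_complete E) : contains_RN E.
Proof.
exists Lf; split; first by move=> c x y; apply: Lf_lin.
apply: emb_gen => //.
- move=> x y _ _; rewrite -(scaleN1r (Lf x)) addrC -Lf_lin //.
  by congr Lf; apply: functional_extensionality_dep => i; rewrite mulN1r addrC.
- by move=> x _; apply: conv_Rep; apply: Lf_conv.
Qed.

End RepTheory.
Section Main.
Variables (R : realType) (E : topologicalLmodType R).

Lemma iii_i (hE : hausdorff_space E) : has_inf_acs_subset E -> contains_RfinN E.
Proof.
move=> [A [infA acsA]].
apply: (@contains_RfinN_of R E (sa hE infA acsA) (sW hE infA acsA)).
- by move=> U U0; exact: (S1 hE infA acsA U0).
- by move=> j; case: (S2 hE infA acsA j).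
- by move=> j x r; case: (S2 hE infA acsA j) => _ h _ _; apply: h.
- by move=> j x y; case: (S2 hE infA acsA j) => _ _ h _; apply: h.
- by move=> j N c; case: (S2 hE infA acsA j) => _ _ _ h; apply: h.
Qed.

Lemma iii_iv (hE : hausdorff_space E) : tvs_complete E ->
  has_inf_acs_subset E -> contains_RN E.
Proof.
move=> hc [A [infA acsA]].
apply: (@contains_RN_of R E (sa hE infA acsA) (sW hE infA acsA)) => //.
- by move=> U U0; exact: (S1 hE infA acsA U0).
- by move=> j; case: (S2 hE infA acsA j).
- by move=> j x r; case: (S2 hE infA acsA j) => _ h _ _; apply: h.
- by move=> j x y; case: (S2 hE infA acsA j) => _ _ h _; apply: h.
- by move=> j N c; case: (S2 hE infA acsA j) => _ _ _ h; apply: h.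
Qed.

Lemma iv_i : contains_RN E -> contains_RfinN E.
Proof.
move=> [f [lin [inj c1 c2]]]; exists f; split.
  by move=> c x y _ _; apply: lin.
split.
- by move=> x y _ _; apply: inj; rewrite in_setE.
- move=> x _ V hV; have [U [hU h]] := c1 x I V hV.
  by exists U; split => // y _; apply: h.
- move=> x _ U hU; have [V [hV h]] := c2 x I U hU.
  by exists V; split => // y _; apply: h.
Qed.

Lemma fs_subZ (x y : nat -> int) : fin_supp x -> fin_supp y -> fin_supp (fun i => y i - x i).
Proof.
move=> /fs_bound [Nx hx] /fs_bound [Ny hy]; apply: (@bound_fs _ _ (maxn Nx Ny)) => i h.
rewrite hx ?hy ?subr0 //; apply: leq_trans h; [apply: leq_maxr|apply: leq_maxl].
Qed.

Lemma fs_intr (z : nat -> int) : fin_supp z -> fin_supp (fun i => (z i)%:~R : R).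
Proof.
move=> /fs_bound [N hN]; apply: (@bound_fs _ _ N) => i h.
by rewrite hN.
Qed.

Lemma int_close (m n : int) : `|(m%:~R : R) - n%:~R| < 1 -> m = n.
Proof.
rewrite -intrB -intr_norm ltrz1 -[1]add0r ltzD1 normr_le0 subr_eq0.
by move/eqP.
Qed.

Lemma i_ii : contains_RfinN E -> contains_ZfinN E.
Proof.
move=> [f [lin [inj c1 c2]]].
pose iota (z : ZN) : RN R := fun i => (z i)%:~R.
exists (fun z => f (iota z)); split.
  move=> x y fx fy; rewrite -[f (iota x)]scale1r -lin; try exact: fs_intr.
  by congr f; apply: functional_extensionality_dep => i; rewrite /iota mul1r intrD.
split.
- move=> x y; rewrite !in_setE => fx fy e.
  have := inj (iota x) (iota y); rewrite !in_setE => /(_ (fs_intr fx) (fs_intr fy) e) e'.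
  apply: functional_extensionality_dep => i.
  by apply: (@intr_inj R); have := congr1 (fun h : RN R => h i) e'.
- move=> x fx V hV; have [U [hU h]] := c1 (iota x) (fs_intr fx) V hV.
  have [k [d [d0 hk]]] := nbhs_boxR hU.
  exists [set y : ZN | forall i, (i < k)%N -> y i = x i]; split.
    exact: boxZ_nbhs.
  move=> y fy hy; apply: h; first exact: fs_intr.
  by apply: hk => i ik; rewrite /iota hy // subrr normr0.
- move=> x fx U hU; have [k hk] := nbhs_boxZ hU.
  have [V [hV h]] := c2 (iota x) (fs_intr fx) _ (boxR_nbhs (iota x) k ltr01).
  exists V; split => // y fy hy; apply: hk => i ik; apply: int_close.
  exact: (h (iota y) (fs_intr fy) hy i ik).
Qed.

Lemma inj_avoid (T : eqType) (u : nat -> T) : injective u ->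
  forall s : seq T, exists k, forall m, (k <= m)%N -> u m \notin s.
Proof.
move=> uinj; elim => [|x s [k IH]]; first by exists 0%N.
have [[m0 e]|ne] := pselect (exists m0, u m0 = x).
  exists (maxn k m0.+1) => m km; rewrite in_cons negb_or IH; last first.
    exact: leq_trans (leq_maxl _ _) km.
  rewrite andbT; apply/eqP => e'; rewrite -e' in e.
  have := leq_trans (leq_maxr _ _) km; rewrite (uinj _ _ e) ltnn.
  by [].
exists k => m km; rewrite in_cons negb_or IH // andbT.
by apply/eqP => e; apply: ne; exists m.
Qed.

Definition en (n : nat) : ZN := fun i => ((i == n) : nat)%:Z.

Lemma fs_en n : fin_supp (en n : nat -> int).
Proof.
apply: (@bound_fs _ _ n.+1) => i h; rewrite /en.
by case: eqP => // e; rewrite e ltnn in h.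
Qed.

Lemma ii_iii : contains_ZfinN E -> has_inf_acs_subset E.
Proof.
move=> [g [add [inj c1 c2]]].
pose z0 : ZN := fun _ => 0.
have fz0 : fin_supp (z0 : nat -> int) by apply: (@bound_fs _ _ 0%N).
have g0 : g z0 = 0.
  have := add z0 z0 fz0 fz0.
  have -> : (fun i => (z0 i : int) + (z0 i : int)) = z0.
    by apply: functional_extensionality_dep => i; rewrite /z0 addr0.
  by move=> e; apply: (@addrI _ (g z0)); rewrite addr0 -e.
have gsub x y : fin_supp (x : nat -> int) -> fin_supp (y : nat -> int) ->
    g (fun i => y i - x i) = g y - g x.
  move=> fx fy; apply/eqP; rewrite eq_sym subr_eq; apply/eqP.
  rewrite -(add (fun i => y i - x i) x (fs_subZ fx fy) fx); congr g.
  by apply: functional_extensionality_dep => i; rewrite subrK.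
have uinj : injective (fun n => g (en n)).
  move=> n m /= e; have := inj (en n) (en m); rewrite !in_setE.
  move=> /(_ (fs_en n) (fs_en m) e) e'.
  have := congr1 (fun h : ZN => h n) e'; rewrite /en eqxx.
  by case: eqP.
exists [set v | exists n, v = g (en n)]; split.
  move=> /finite_seqP [s As]; have [k hk] := inj_avoid uinj s.
  have : [set v | exists n, v = g (en n)] (g (en k)) by exists k.
  by rewrite As /= => kin; have := hk k (leqnn k); rewrite kin.
move=> U U0.
have U0' : nbhs (g z0) U by rewrite g0.
have [W [hW h]] := c1 z0 fz0 U U0'.
have [k hk] := nbhs_boxZ hW.
exists ((fun n => g (en n)) @` `I_k); split.
- exact/finite_image/finite_II.
- by move=> v [n _ <-]; exists n.
- pose H := [set v | exists y : ZN, [/\ fin_supp (y : nat -> int),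
     (forall i, (i < k)%N -> y i = 0) & v = g y]].
  have HU : H `<=` U.
    by move=> v [y [fy yk ->]]; apply: h => //; apply: hk => i ik; rewrite yk.
  move=> v gv; apply: HU; apply: gv; split.
    split; first by exists z0; split => //; rewrite g0.
    move=> v1 v2 [y1 [f1 k1 ->]] [y2 [f2 k2 ->]].
    exists (fun i => y1 i - y2 i); split.
    + exact: fs_subZ.
    + by move=> i ik; rewrite k1 ?k2 // subrr.
    + by rewrite gsub.
  move=> w [[n ->] nF]; exists (en n); split => //; first exact: fs_en.
  move=> i ik; rewrite /en; case: eqP => // e; exfalso; apply: nF.
  by exists n => //; rewrite /= -e.
Qed.

End Main.

Theorem theorem11p1 (R : realType) (E : topologicalLmodType R) :
  hausdorff_space E ->
  [/\ contains_RfinN E <-> contains_ZfinN E,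
      contains_ZfinN E <-> has_inf_acs_subset E
    & tvs_complete E -> (has_inf_acs_subset E <-> contains_RN E)].
Proof.
move=> hE; split.
- split; first exact: i_ii.
  by move=> h; apply: iii_i => //; apply: ii_iii.
- split; first exact: ii_iii.
  by move=> h; apply: i_ii; apply: iii_i.
- move=> hc; split; first exact: iii_iv.
  by move=> h; apply: ii_iii; apply: i_ii; apply: iv_i.
Qed.
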